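(* Let $K$ be a positive integer, let $T>0$, and set $\omega_0 = \frac{2\pi}{T}$. Let $N$ be an integer and let $0\leq t_1<t_2<\cdots<t_N < T$. Define the $(N-1)\times(2K+1)$ complex matrix $\mathbf{A}$ whose columns are indexed by $k\in\{-K,\dots,K\}$ and whose rows are indexed by $n\in\{1,\dots,N-1\}$, with entries $$\mathbf{A}_{n,k} = e^{jk\omega_0 t_{n+1}} - e^{jk\omega_0 t_{n}} \quad (k\neq 0), \qquad \mathbf{A}_{n,0} = t_{n+1}-t_n .$$ Then $\mathbf{A}$ is left-invertible (i.e., has full column rank) provided that $N \geq 2K+2$.
   Context: Here $j$ denotes the imaginary unit. The columns are ordered $k=-K,\dots,-1,0,1,\dots,K$, so the middle column is $(t_2-t_1, t_3-t_2,\dots,t_N-t_{N-1})^\top$. *)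

(* Defs.v *)
From HB Require Import structures.
From mathcomp Require Import all_boot all_order all_algebra.
From mathcomp Require Import all_classical all_reals.
From mathcomp Require Import trigo.
From mathcomp Require Import complex.
Set Implicit Arguments. Unset Strict Implicit. Unset Printing Implicit Defensive.
Import Order.TTheory GRing.Theory Num.Theory.
Local Open Scope ring_scope.
Local Open Scope complex_scope.

Definition expj (R : realType) (x : R) : R[i] := (cos x) +i* (sin x).

(* The matrix A of the statement. Paper's times t_1,...,t_N are t 0,...,t (N-1);
   row n : 'I_(N-1) is the paper's row n+1; column k : 'I_(2K+1) is the
   paper's column k - K. *)
Definition Amx (R : realType) (K N : nat) (T : R) (t : nat -> R) :
    'M[R[i]]_(N.-1, (2 * K).+1) :=
  let w0 := 2 * pi / T in
  \matrix_(n < N.-1, k < (2 * K).+1)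
    let kk : int := (k%:Z - K%:Z)%R in
    if kk == 0 then ((t n.+1 - t n)%:C)
    else expj ((kk%:~R) * w0 * t n.+1) - expj ((kk%:~R) * w0 * t n).

(* Main.v *)
Require Import Defs.
From HB Require Import structures.
From mathcomp Require Import all_boot all_order all_algebra.
From mathcomp Require Import all_classical all_reals.
From mathcomp Require Import trigo.
From mathcomp Require Import complex.
From mathcomp Require Import ring lra zify.
From mathcomp Require Import topology normedtype derive realfun.
Import Order.TTheory GRing.Theory Num.Theory numFieldNormedType.Exports.
Local Open Scope ring_scope.
Local Open Scope complex_scope.
Lemma expjD (R : realType) (a b : R) : expj (a + b) = expj a * expj b.
Proof. by rewrite /expj cosD sinD /=; congr (_ +i* _); ring. Qed.

Lemma expj0 (R : realType) : expj (0 : R) = 1.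
Proof. by rewrite /expj cos0 sin0. Qed.

Lemma expj_inj (R : realType) (a b : R) : 0 <= a -> a < pi *+ 2 ->
  0 <= b -> b < pi *+ 2 -> expj a = expj b -> a = b.
Proof.
move=> a0 a2 b0 b2 e.
have : expj (a - b) = 1 by rewrite expjD e -expjD subrr expj0.
case=> c1 s0.
set u := (a - b) / 2.
have ab : a - b = u + u by rewrite /u; field.
have su : sin u = 0.
  move: c1; rewrite ab cosD -expr2 -expr2 cos2sin2 => h.
  have : sin u ^+ 2 = 0 by lra.
  by move/eqP; rewrite expf_eq0 /= => /eqP.
have hu1 : u < pi by rewrite /u; lra.
have hu2 : - pi < u by rewrite /u; lra.
have [ug|ul|ue] := ltgtP u 0.
- have : 0 < sin (- u) by apply: sin_gt0_pi; lra.
  by rewrite sinN su; lra.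
- have : 0 < sin u by apply: sin_gt0_pi; lra.
  by rewrite su; lra.
- by move: ab; rewrite ue; lra.
Qed.

Lemma expjMn (R : realType) (x : R) n : expj (n%:R * x) = expj x ^+ n.
Proof.
elim: n => [|n IH]; first by rewrite mul0r expj0 expr0.
by rewrite exprS -IH -expjD mulrSr mulrDl mul1r addrC.
Qed.

Lemma expj_conj (R : realType) (x : R) : (expj x)^* = expj (- x).
Proof. by rewrite /expj cosN sinN. Qed.

Lemma trig_zero (R : realType) (K : nat) (T : R) (d : 'I_(2*K).+1 -> R[i])
  (s : 'I_(2*K).+1 -> R) :
  0 < T -> injective s -> (forall i, 0 <= s i < T) ->
  (forall i, \sum_(k < (2*K).+1)
      d k * expj ((k%:Z - K%:Z)%R%:~R * (2 * pi / T) * s i) = 0) ->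
  forall k, d k = 0.
Proof.
move=> T0 sinj srng hs k.
set w := 2 * pi / T.
have w0 : 0 < w by rewrite /w divr_gt0 // mulr_gt0 // pi_gt0.
pose z i := expj (w * s i).
pose q := \poly_(j < (2*K).+1) d (inord j).
have hz i : q.[z i] = 0.
  rewrite horner_poly; transitivity (z i ^+ K * 0); last by rewrite mulr0.
  rewrite -[X in _ = _ * X](hs i) mulr_sumr.
  apply: eq_bigr => j _; rewrite inord_val mulrCA; congr (_ * _).
  rewrite /z -expjMn -expjMn -expjD; congr expj.
  by rewrite /w intrB /=; ring.
have zinj : injective z.
  move=> i j /expj_inj h; apply: sinj.
  have [si1 si2] := andP (srng i); have [sj1 sj2] := andP (srng j).
  have wT : w * T = pi *+ 2 by rewrite /w divfK ?gt_eqF // mulr_natl.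
  have h' : w * s i = w * s j.
    apply: h.
    - by rewrite mulr_ge0 // ltW.
    - by rewrite -wT ltr_pM2l.
    - by rewrite mulr_ge0 // ltW.
    - by rewrite -wT ltr_pM2l.
  by move: h'; move/mulfI; apply; rewrite gt_eqF.
have q0 : q = 0.
  apply: (@roots_geq_poly_eq0 _ q [seq z i | i <- enum 'I_(2*K).+1]).
  - by apply/allP => x /mapP [i _ ->]; rewrite /root hz.
  - by rewrite map_inj_uniq // enum_uniq.
  - by rewrite size_map size_enum_ord size_poly.
have := congr1 (fun p : {poly R[i]} => p`_k) q0.
by rewrite coef_poly ltn_ord inord_val coef0.
Qed.
Lemma is_derive_lin (R : realType) (a s : R) : is_derive s 1 (fun u : R => a * u) a.
Proof.
have := is_deriveZ a (is_derive_id s (1 : R)).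
have -> : a \*: (@id R) = (fun u : R => a * u) by apply/funext => u.
by rewrite /GRing.scale /= mulr1.
Qed.

Lemma is_derive_trig (R : realType) (a p q s : R) :
  is_derive s 1 (fun u : R => p * cos (a * u) - q * sin (a * u))
    (- a * (p * sin (a * s) + q * cos (a * s))).
Proof.
have hc := is_derive1_comp (is_derive_cos (a * s)) (@is_derive_lin R a s).
have hs := is_derive1_comp (is_derive_sin (a * s)) (@is_derive_lin R a s).
have := is_deriveB (is_deriveZ p hc) (is_deriveZ q hs).
have -> : p \*: (cos \o (fun u : R => a * u)) - q \*: (sin \o (fun u : R => a * u))
  = (fun u : R => p * cos (a * u) - q * sin (a * u)) by apply/funext => u.
move=> h.
have e : p *: (- sin (a * s) * a) - q *: (cos (a * s) * a) =
  - a * (p * sin (a * s) + q * cos (a * s)) by rewrite /GRing.scale /=; ring.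
by rewrite -e.
Qed.
Lemma reC (R : realType) (z w : R[i]) :
  ((2 * (complex.Re z * complex.Re w - complex.Im z * complex.Im w) : R)%:C : R[i]) = z * w + (z * w)^*.
Proof.
case: z => a b; case: w => u v /=.
apply/eqP; rewrite eq_complex /=; apply/andP; split; apply/eqP; ring.
Qed.

Lemma kernel_triv (R : realType) (K N : nat) (T : R) (t : nat -> R) :
  (0 < K)%N -> 0 < T ->
  0 <= t 0%N ->
  (forall i : nat, (i.+1 < N)%N -> t i < t i.+1) ->
  t N.-1 < T ->
  (2 * K + 2 <= N)%N ->
  forall c : 'I_(2 * K).+1 -> R[i],
  (forall n : 'I_N.-1, \sum_k Amx K N T t n k * c k = 0) -> forall k, c k = 0.
Proof.
move=> K0 T0 t0 tinc tN KN c hc.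
have tlt : forall i j, (i < j)%N -> (j < N)%N -> t i < t j.
  move=> i j; elim: j => // j IH; rewrite ltnS leq_eqVlt => /orP[/eqP->|hij] hj.
    exact: tinc.
  exact: lt_trans (IH hij (ltnW hj)) (tinc _ hj).
have tle : forall i j, (i <= j)%N -> (j < N)%N -> t i <= t j.
  move=> i j; rewrite leq_eqVlt => /orP[/eqP->|h] hj; first exact: lexx.
  exact/ltW/tlt.
have trng : forall i, (i < N)%N -> 0 <= t i < T.
  move=> i hi; apply/andP; split; first exact: le_trans t0 (tle _ _ (leq0n i) hi).
  by apply: le_lt_trans tN; apply: tle; lia.
have iN : forall i : 'I_(2*K).+1, (i.+1 < N)%N by move=> i; have := ltn_ord i; lia.
have kKlt : (K < (2*K).+1)%N by lia.
pose kK : 'I_(2*K).+1 := Ordinal kKlt.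
have eps0 : forall k : 'I_(2*K).+1, ((k%:Z - K%:Z) == 0) = (k == kK).
  by move=> k; rewrite subr_eq0 eqz_nat.
pose E (k : 'I_(2*K).+1) (s : R) : R[i] := if (k%:Z - K%:Z) == 0 then s%:C
  else expj (((k%:Z - K%:Z))%:~R * (2 * pi / T) * s).
have hA : forall n k, Amx K N T t n k = E k (t n.+1) - E k (t n).
  by move=> n k; rewrite mxE /= /E; case: ifP => _ //; rewrite raddfB.
pose G s := \sum_k c k * E k s.
have hG1 : forall n, (n.+1 < N)%N -> G (t n.+1) = G (t n).
  move=> n hn; apply/eqP; rewrite -subr_eq0; apply/eqP.
  have hn' : (n < N.-1)%N by lia.
  transitivity (\sum_k Amx K N T t (Ordinal hn') k * c k); last exact: hc.
  by rewrite /G -sumrB; apply: eq_bigr => k _; rewrite hA /=; ring.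
have hG : forall n, (n < N)%N -> G (t n) = G (t 0).
  by elim=> // n IH hn; rewrite hG1 // IH //; exact: ltnW.
have hGs : forall s, G s = c kK * s%:C +
    \sum_(k | k != kK) c k * expj ((k%:Z - K%:Z)%:~R * (2 * pi / T) * s).
  move=> s; rewrite /G (bigD1 kK) //=; congr (_ + _).
    by rewrite /E /= subrr eqxx.
  by apply: eq_bigr => k hk; rewrite /E eps0 (negbTE hk).
case: (eqVneq (c kK) 0) => ck.
  pose d k := if k == kK then - G (t 0) else c k.
  have hd := @trig_zero R K T d (fun i => t i) T0.
  have {}hd : forall k, d k = 0.
    apply: hd.
    - move=> i j /= e; apply/val_inj; case: (ltngtP i j) => // h.
        by have := tlt _ _ h (ltnW (iN j)); rewrite e ltxx.
      by have := tlt _ _ h (ltnW (iN i)); rewrite e ltxx.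
    - by move=> i; exact: trng (ltnW (iN i)).
    move=> i /=.
    transitivity (G (t i) - G (t 0)); last by rewrite hG ?subrr // ltnW.
    rewrite [in RHS]hGs ck mul0r add0r (bigD1 kK) //= /d eqxx subrr mul0r mul0r.
    rewrite expj0 mulr1 addrC; congr (_ + _).
    by apply: eq_bigr => k hk; rewrite (negbTE hk).
  move=> k; case: (eqVneq k kK) => [->//|nk].
  by have := hd k; rewrite /d (negbTE nk).
exfalso.
pose al k := (c kK)^* * c k.
pose x k := complex.Re (al k).
pose y k := complex.Im (al k).
pose ek (k : 'I_(2*K).+1) : R := (k%:Z - K%:Z)%:~R * (2 * pi / T).
pose r k : R -> R := if k == kK then (fun u => x k * u)
  else (fun u => x k * cos (ek k * u) - y k * sin (ek k * u)).
pose h : R -> R := \sum_(k < (2*K).+1) r k.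
have hE : forall s, h s = \sum_k r k s by move=> s; rewrite /h fct_sumE.
have hr : forall k s, ((2 * r k s : R)%:C : R[i]) = al k * E k s + (al k * E k s)^*.
  move=> k s; rewrite -reC; congr (_%:C); rewrite /r /E eps0 /x /y.
  case: ifP => _ /=.
    by rewrite mulr0 subr0.
  by rewrite /expj /ek /=.
have hh : forall s, ((2 * h s : R)%:C : R[i]) = (c kK)^* * G s + ((c kK)^* * G s)^*.
  move=> s; rewrite hE mulr_sumr raddf_sum /G mulr_sumr raddf_sum -big_split.
  by apply: eq_bigr => k _ /=; rewrite mulrA hr.
have hht : forall n, (n < N)%N -> h (t n) = h (t 0).
  move=> n hn; have := hh (t n); rewrite hG // -hh => /complexI.
  by apply: mulfI; rewrite pnatr_eq0.
pose D k (s : R) : R := if k == kK then x k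
  else - ek k * (x k * sin (ek k * s) + y k * cos (ek k * s)).
have hder : forall k (s : R), is_derive s (1 : R) (r k) (D k s).
  move=> k s; rewrite /r /D; case: ifP => _.
    exact: is_derive_lin.
  exact: is_derive_trig.
have hhd : forall s : R, is_derive s (1 : R) h (\sum_k D k s).
  by move=> s; apply: is_derive_sum => k; exact: hder.
have hxi : forall i : 'I_(2*K).+1, exists xi,
    (t i < xi < t i.+1) /\ \sum_k D k xi = 0.
  move=> i.
  have [xi xin xid] : exists2 xi, xi \in `]t i, t i.+1[ & is_derive xi 1 h 0.
    apply: Rolle.
    - exact: tinc.
    - by move=> z _; exact: (@ex_derive _ _ _ _ _ _ _ (hhd z)).
    - apply: derivable_within_continuous => z _.
      exact: (@ex_derive _ _ _ _ _ _ _ (hhd z)).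
    - have h1 := iN i; rewrite (hht i) ?(hht i.+1) //; lia.
  exists xi; split; first by rewrite in_itv /= in xin.
  rewrite -(@derive_val _ _ _ _ _ _ _ (hhd xi)).
  exact: (@derive_val _ _ _ _ _ _ _ xid).
have [xi hxi'] := fin_all_exists hxi.
pose be k : R[i] := if k == kK then (x k)%:C else (ek k)%:C * 'i * al k.
have hD : forall k s, ((2 * D k s : R)%:C : R[i]) =
    be k * expj (ek k * s) + (be k * expj (ek k * s))^*.
  move=> k s; rewrite -reC; congr (_%:C); rewrite /D /be.
  case: ifP => /eqP hk.
    have -> : ek k = 0 by rewrite /ek hk /= subrr mul0r.
    by rewrite mul0r /expj cos0 sin0 -complexr0 /=; ring.
  rewrite /x /y /expj; case: (al k) => a b /=; ring.
have ekrev : forall k, ek (rev_ord k) = - ek k.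
  move=> k; rewrite /ek -mulNr -intrN; congr (_%:~R * _).
  have := ltn_ord k; rewrite /= subSS => hk.
  rewrite -subzn; last by lia.
  lia.
have hsum : forall s, \sum_k (be k + (be (rev_ord k))^*) * expj (ek k * s) =
    ((2 * \sum_k D k s : R)%:C).
  move=> s; rewrite mulr_sumr raddf_sum.
  transitivity (\sum_k (be k * expj (ek k * s) + (be k * expj (ek k * s))^*)); last first.
    by apply: eq_bigr => k _ /=; rewrite hD.
  under eq_bigr do rewrite mulrDl.
  rewrite !big_split /=; congr (_ + _).
  rewrite [RHS](reindex_inj rev_ord_inj) /=.
  apply: eq_bigr => k _; rewrite rmorphM /=; congr (_ * _).
  rewrite ekrev mulNr /expj cosN sinN /=.
  exact: (esym (conjcK _)).
have xiP : forall i : 'I_(2*K).+1, t i < xi i < t i.+1.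
  by move=> i; case: (hxi' i).
have hz := @trig_zero R K T (fun k => be k + (be (rev_ord k))^*) xi T0.
have {}hz : forall k, be k + (be (rev_ord k))^* = 0.
  apply: hz.
  - move=> i j e; apply/val_inj; case: (ltngtP i j) => // hij.
      have h1 := iN j.
      have := lt_le_trans (andP (xiP i)).2 (tle _ _ hij (ltnW h1)).
      by move/lt_trans => /(_ _ (andP (xiP j)).1); rewrite e ltxx.
    have h1 := iN i.
    have := lt_le_trans (andP (xiP j)).2 (tle _ _ hij (ltnW h1)).
    by move/lt_trans => /(_ _ (andP (xiP i)).1); rewrite e ltxx.
  - move=> i; have h1 := iN i; have [h2 h3] := andP (xiP i).
    apply/andP; split.
      exact: le_trans (andP (trng i (ltnW h1))).1 (ltW h2).
    exact: lt_trans h3 (andP (trng i.+1 h1)).2.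
  - move=> i; rewrite [LHS]hsum; have [_ ->] := hxi' i.
    by rewrite mulr0.
have := hz kK.
have -> : rev_ord kK = kK by apply/val_inj => /=; lia.
rewrite /be eqxx /x /al; move: ck; case: (c kK) => a b nz /=.
move/eqP; rewrite eq_complex /= => /andP[/eqP e _].
move: nz; rewrite eq_complex /= negb_and => /orP[] hne.
  have : 0 < a * a by rewrite -expr2 exprn_even_gt0.
  have : 0 <= b * b by rewrite -expr2 exprn_even_ge0.
  lra.
have : 0 < b * b by rewrite -expr2 exprn_even_gt0.
have : 0 <= a * a by rewrite -expr2 exprn_even_ge0.
lra.
Qed.

Local Close Scope complex_scope.

Theorem theorem1 (R : realType) (K N : nat) (T : R) (t : nat -> R) :
  (0 < K)%N -> 0 < T ->
  0 <= t 0%N ->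
  (forall i : nat, (i.+1 < N)%N -> t i < t i.+1) ->
  t N.-1 < T ->
  (2 * K + 2 <= N)%N ->
  exists B : 'M[R[i]]_((2 * K).+1, N.-1), B *m Amx K N T t = 1%:M.
Proof.
move=> K0 T0 t0 tinc tN KN.
have ker := @kernel_triv R K N T t K0 T0 t0 tinc tN KN.
apply/row_fullP; rewrite /row_full -mxrank_tr.
have -> : (\rank (Amx K N T t)^T == (2 * K).+1) = row_free (Amx K N T t)^T by [].
rewrite -kermx_eq0.
apply/eqP/matrixP => i j; rewrite [RHS]mxE.
have /sub_kermxP := row_sub i (kermx (Amx K N T t)^T).
set u := row i _ => hu.
have -> : kermx (Amx K N T t)^T i j = u 0 j by rewrite /u [RHS]mxE.
apply: (ker (fun k => u 0 k)) => n.
have := congr1 (fun M : 'M_(1, N.-1) => M 0 n) hu.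
rewrite !mxE => h; rewrite -[RHS]h; apply: eq_bigr => k _; rewrite mxE mulrC.
by rewrite !mxE.
Qed.
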